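(* Let $d\ge1$. As an identity of rational functions in $s_1,\dots,s_d,t_1,\dots,t_d$ (in particular for all integer vectors $\vec s,\vec t$ at which all denominators on both sides are nonzero), $$\sum_{\sigma,\tau\in\mathcal{S}_d}\frac{\operatorname{sgn}\sigma\,\operatorname{sgn}\tau}{\prod_{i=1}^d\left(d+1-i+\sum_{j=i}^d\left(s_{\sigma(j)}+t_{\tau(j)}\right)\right)}=\prod_{1\le i<j\le d}(s_i-s_j)(t_i-t_j)\prod_{i,j=1}^d\frac{1}{1+s_i+t_j}.$$
   Context: $\mathcal{S}_d$ is the symmetric group on $\{1,\dots,d\}$ and $\operatorname{sgn}$ the sign of a permutation. *)

(* Defs.v *)
From HB Require Import structures.
From mathcomp Require Import all_boot all_order all_algebra all_fingroup.
Set Implicit Arguments. Unset Strict Implicit. Unset Printing Implicit Defensive.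
Import Order.TTheory GRing.Theory Num.Theory.
Local Open Scope ring_scope.

(* Indices are 0-based: i : 'I_d stands for the paper's index i+1, so the
   paper's  d+1-(i+1) = d-i. *)
Definition lhs_factor (R : numFieldType) (d : nat) (s t : 'I_d -> R)
  (sigma tau : 'S_d) (i : 'I_d) : R :=
  (d - i)%:R + \sum_(j : 'I_d | (i <= j)%N) (s (sigma j) + t (tau j)).

Definition lhs_denom (R : numFieldType) (d : nat) (s t : 'I_d -> R)
  (sigma tau : 'S_d) : R :=
  \prod_(i : 'I_d) lhs_factor s t sigma tau i.

(* Main.v *)
Require Import Defs.
From HB Require Import structures.
From mathcomp Require Import all_boot all_order all_algebra all_fingroup.
From mathcomp Require Import ring.
Set Implicit Arguments. Unset Strict Implicit. Unset Printing Implicit Defensive.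
Import Order.TTheory GRing.Theory Num.Theory.
Local Open Scope ring_scope.

Section Aux.
Variable R : fieldType.
Lemma suffix_lift n (y : 'I_n.+1 -> R) k (s : 'S_n) (i : 'I_n) :
 \sum_(j : 'I_n.+1 | (lift ord0 i <= j)%N) y (lift_perm ord0 k s j)
 = \sum_(j : 'I_n | (i <= j)%N) y (lift k (s j)).
Proof.
rewrite big_mkcond big_ord_recl /= add0r [RHS]big_mkcond.
apply: eq_bigr => j _; by rewrite lift_perm_lift /bump !leq0n !add1n ltnS.
Qed.

Lemma sum_lift_perm n (F : 'S_n.+1 -> R) :
  \sum_(s : 'S_n.+1) F s = \sum_(k : 'I_n.+1) \sum_(s : 'S_n) F (lift_perm ord0 k s).
Proof.
rewrite (partition_big (fun s : 'S_n.+1 => s ord0) predT) //=.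
apply: eq_bigr => j0 _.
set i0 := (ord0 : 'I_n.+1).
rewrite (reindex (lift_perm i0 j0)); last first.
  pose ulsf i (s : 'S_n.+1) k := odflt k (unlift (s i) (s (lift i k))).
  have ulsfK i (s : 'S_n.+1) k: lift (s i) (ulsf i s k) = s (lift i k).
    rewrite /ulsf; have:= neq_lift i k.
    by rewrite -(can_eq (permK s)) => /unlift_some[] ? ? ->.
  have inj_ulsf: injective (ulsf i0 _).
    move=> s; apply: can_inj (ulsf (s i0) s^-1%g) _ => k'.
    by rewrite {1}/ulsf ulsfK !permK liftK.
  exists (fun s => perm (inj_ulsf s)) => [s _ | s].
    by apply/permP=> k'; rewrite permE /ulsf lift_perm_lift lift_perm_id liftK.
  move/(s _ =P _) => si0; apply/permP=> k.
  case: (unliftP i0 k) => [k'|] ->; rewrite ?lift_perm_id //.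
  by rewrite lift_perm_lift -si0 permE ulsfK.
by apply: eq_bigl => s; rewrite lift_perm_id eqxx.
Qed.

Lemma perm_sum_inv n (y : 'I_n -> R) :
  (forall (s : 'S_n) (i : 'I_n), \sum_(j : 'I_n | (i <= j)%N) y (s j) != 0) ->
  \sum_(s : 'S_n) \prod_(i : 'I_n) (\sum_(j : 'I_n | (i <= j)%N) y (s j))^-1
  = \prod_(k : 'I_n) (y k)^-1.
Proof.
elim: n y => [|n IH] y hy.
  rewrite big_ord0 (eq_bigr (fun _ => 1)); last by move=> s _; rewrite big_ord0.
  by rewrite sumr_const card_Sn.
have Y0 : \sum_k y k != 0.
  by have := hy 1%g ord0; rewrite (eq_bigr y) // => j _; rewrite perm1.
have yk0 : forall k, y k != 0.
  move=> k; have := hy (tperm k ord_max) ord_max.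
  rewrite (big_pred1 ord_max) ?tpermR // => j /=.
  by rewrite -val_eqE /= eqn_leq leq_ord.
rewrite sum_lift_perm.
under eq_bigr => k _.
  under eq_bigr => s _.
    rewrite big_ord_recl.
    rewrite (_ : \sum_(j : 'I_n.+1 | (ord0 <= j)%N) y (lift_perm ord0 k s j) = \sum_j y j); last first.
      by rewrite (eq_bigl predT) //; symmetry; apply: reindex_inj; apply: perm_inj.
    rewrite (eq_bigr (fun i : 'I_n => (\sum_(j : 'I_n | (i <= j)%N) y (lift k (s j)))^-1)); last by move=> i _; rewrite suffix_lift.
  over.
  rewrite -mulr_sumr (IH (fun j => y (lift k j))); last first.
    move=> s i; have := hy (lift_perm ord0 k s) (lift ord0 i).
    by rewrite suffix_lift.
over.
rewrite -mulr_sumr.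
rewrite [X in _ * X](eq_bigr (fun k => y k * \prod_k (y k)^-1)); last first.
  move=> k _; rewrite (bigD1_ord k) //= mulrA mulfV ?mul1r //.
by rewrite -mulr_suml mulrA mulVf ?mul1r.
Qed.
Lemma det_schur n (A : 'M[R]_(1 + n)) : A 0 0 != 0 ->
  \det A = A 0 0 * \det (\matrix_(i, j) (A (rshift 1 i) (rshift 1 j)
             - A (rshift 1 i) 0 * A 0 (rshift 1 j) / A 0 0)).
Proof.
move=> c0; set c := A 0 0.
rewrite -[A in LHS]submxK.
set a := ulsubmx A; set u := ursubmx A; set v := dlsubmx A; set B := drsubmx A.
pose L := block_mx (1%:M : 'M[R]_1) 0 (- (c^-1) *: v) (1%:M : 'M[R]_n).
have dL : \det L = 1 by rewrite det_lblock !det1 mulr1.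
have ha : a = c%:M.
  rewrite [a]mx11_scalar !mxE; congr (_%:M); congr (A _ _); apply: val_inj => //.
rewrite -[LHS]mul1r -dL -det_mulmx mulmx_block.
rewrite !mul1mx !mul0mx !addr0 ha mul_mx_scalar scalerA mulrN mulfV // scaleN1r addNr.
rewrite det_ublock det_mx11 mxE eqxx mulr1n; congr (_ * _).
congr (\det _); apply/matrixP => i j.
rewrite !mxE big_ord1 !mxE /c.
rewrite (_ : lshift n 0 = 0); last by apply: val_inj.
rewrite /c; ring.
Qed.
Lemma det_schur' n (A : 'M[R]_n.+1) : A 0 0 != 0 ->
  \det A = A 0 0 * \det (\matrix_(i, j) (A (lift 0 i) (lift 0 j)
             - A (lift 0 i) 0 * A 0 (lift 0 j) / A 0 0)).
Proof.
move=> h; rewrite (det_schur (A := A : 'M_(1 + n))) //; congr (_ * \det _).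
apply/matrixP => i j; rewrite !mxE.
have e : forall k : 'I_n, rshift 1 k = lift 0 k :> 'I_(1 + n) by move=> k; apply: val_inj.
by rewrite !e.
Qed.

Lemma det_scale_rc n (r c : 'I_n -> R) (M : 'M[R]_n) :
  \det (\matrix_(i, j) (r i * c j * M i j)) = (\prod_i r i) * (\prod_j c j) * \det M.
Proof.
rewrite /determinant mulr_sumr; apply: eq_bigr => s _.
rewrite (mulrC (_ * _)) -mulrA; congr (_ * _).
rewrite (eq_bigr (fun i => r i * c (s i) * M i (s i))); last by move=> i _; rewrite mxE.
rewrite !big_split /= mulrC; congr (_ * (_ * _)).
by symmetry; apply: reindex_inj; apply: perm_inj.
Qed.

Definition Vd n (a b : 'I_n -> R) :=
  \prod_(i : 'I_n) \prod_(j : 'I_n | (i < j)%N) ((a i - a j) * (b i - b j)).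
Definition Dd n (a b : 'I_n -> R) := \prod_(i : 'I_n) \prod_(j : 'I_n) (a i + b j)^-1.

Lemma Vd_rec n (a b : 'I_n.+1 -> R) :
  Vd a b = \prod_(j : 'I_n) ((a 0 - a (lift 0 j)) * (b 0 - b (lift 0 j)))
           * Vd (fun i => a (lift 0 i)) (fun i => b (lift 0 i)).
Proof.
rewrite /Vd big_ord_recl; congr (_ * _).
  by rewrite big_mkcond big_ord_recl /= mul1r.
apply: eq_bigr => i _.
rewrite big_mkcond big_ord_recl /= mul1r [RHS]big_mkcond.
apply: eq_bigr => j _.
by rewrite /bump !leq0n !add1n ltnS.
Qed.

Lemma Dd_rec n (a b : 'I_n.+1 -> R) :
  Dd a b = (a 0 + b 0)^-1 * \prod_(j : 'I_n) (a 0 + b (lift 0 j))^-1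
           * \prod_(i : 'I_n) (a (lift 0 i) + b 0)^-1
           * Dd (fun i => a (lift 0 i)) (fun i => b (lift 0 i)).
Proof.
rewrite /Dd big_ord_recl big_ord_recl -!mulrA; congr (_ * (_ * _)).
rewrite (eq_bigr (fun i => (a (lift 0 i) + b 0)^-1 *
   \prod_(j < n) (a (lift 0 i) + b (lift 0 j))^-1)); last by move=> i _; rewrite big_ord_recl.
by rewrite big_split.
Qed.

Lemma cauchy n (a b : 'I_n -> R) : (forall i j, a i + b j != 0) ->
  \det (\matrix_(i, j) (a i + b j)^-1) = Vd a b * Dd a b.
Proof.
elim: n a b => [|n IH] a b h.
  by rewrite det_mx00 /Vd /Dd !big_ord0 mulr1.
rewrite det_schur' ?mxE ?invr_eq0 //.
set a' := fun i => a (lift 0 i); set b' := fun i => b (lift 0 i).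
pose r i := (a' i - a 0) / (a' i + b 0).
pose c j := (b' j - b 0) / (a 0 + b' j).
rewrite (_ : \matrix_(i, j) _ = \matrix_(i, j) (r i * c j * (\matrix_(i, j) (a' i + b' j)^-1) i j)); last first.
  apply/matrixP => i j; rewrite !mxE /r /c /a' /b'.
  have h1 := h (lift 0 i) (lift 0 j); have h2 := h (lift 0 i) 0;
  have h3 := h 0 (lift 0 j); have h4 := h 0 0.
  by field; rewrite h1 h2 h3 h4 oner_neq0.
rewrite det_scale_rc IH; last by move=> i j; apply: h.
have e : \prod_(j < n) ((a 0 - a (lift 0 j)) * (b 0 - b (lift 0 j)))
    = \prod_(j < n) ((a' j - a 0) * (b' j - b 0)).
  by apply: eq_bigr => j _; rewrite -mulrNN !opprB.
rewrite Vd_rec Dd_rec e -/a' -/b' /r /c !big_split /=.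
ring.
Qed.
End Aux.

Lemma count_ge d (R : numFieldType) (i : 'I_d) :
  \sum_(j : 'I_d | (i <= j)%N) (1 : R) = (d - i)%:R.
Proof.
have := @big_geq_mkord _ 0 +%R i d xpredT (fun _ => 1); rewrite /= => <-.
rewrite sumr_const_nat.
by rewrite -[(_ *+ _)]/(_%:R).
Qed.

Theorem mainTheorem3 (R : numFieldType) (d : nat) (hd : (0 < d)%N)
  (s t : 'I_d -> R)
  (hden : forall (sigma tau : 'S_d) (i : 'I_d), lhs_factor s t sigma tau i != 0)
  (hden2 : forall i j : 'I_d, 1 + s i + t j != 0) :
  \sum_(sigma : 'S_d) \sum_(tau : 'S_d)
     ((-1) ^+ sigma * (-1) ^+ tau) / lhs_denom s t sigma tau
  = (\prod_(i : 'I_d) \prod_(j : 'I_d | (i < j)%N) ((s i - s j) * (t i - t j)))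
    * \prod_(i : 'I_d) \prod_(j : 'I_d) (1 + s i + t j)^-1.
Proof.
pose x i j := 1 + s i + t j.
have hf : forall sg tu i, lhs_factor s t sg tu i = \sum_(j : 'I_d | (i <= j)%N) x (sg j) (tu j).
  move=> sg tu i; rewrite /lhs_factor /x -count_ge -big_split /=.
  by apply: eq_bigr => j _; rewrite addrA.
transitivity (\sum_(rho : 'S_d) (-1) ^+ rho * \prod_k (x k (rho k))^-1).
  under eq_bigr => sg _ do rewrite (reindex_inj (mulgI sg)).
  rewrite exchange_big; apply: eq_bigr => rho _.
  rewrite -(perm_sum_inv (y := fun k => x k (rho k))); last first.
    move=> sg i; have := hden sg (sg * rho)%g i.
    by rewrite hf (eq_bigr (fun j => x (sg j) (rho (sg j)))) // => j _; rewrite permM.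
  rewrite mulr_sumr; apply: eq_bigr => sg _.
  rewrite odd_permM signr_addb signrMK; congr (_ * _).
  rewrite /lhs_denom -prodfV; apply: eq_bigr => i _; rewrite hf; congr (_^-1).
  by apply: eq_bigr => j _; rewrite permM.
have hc := cauchy (a := fun i => 1 + s i) (b := t) hden2.
rewrite (_ : \sum_(rho : 'S_d) _ = \det (\matrix_(i, j) ((1 + s i) + t j)^-1)); last first.
  rewrite /determinant; apply: eq_bigr => rho _; congr (_ * _).
  by apply: eq_bigr => i _; rewrite mxE.
rewrite hc /Vd /Dd; congr (_ * _).
apply: eq_bigr => i _; apply: eq_bigr => j _.
by ring.
Qed.
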